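(* For every integer $k\ge 2$, the class $\mathcal{G}_k$ is closed under taking minors (edge deletions and edge contractions).
   Context: For $n\ge 1$ let $E_n$ be the edge set of $K_n$ and $\mathrm{CUT}_n\subseteq\mathbb{R}^{E_n}$ the cut polytope, i.e. $\mathrm{conv}\{(x_ix_j)_{ij\in E_n}: x\in\{\pm1\}^n\}$. The support graph of a linear inequality $w^Tx\le\alpha$ on $\mathbb{R}^{E_n}$ is $H=(W,F)$ with $F=\{ij: w_{ij}\ne0\}$ and $W$ the set of nodes covered by $F$; the inequality is supported by at most $k$ points if $|W|\le k$. Let $\mathcal{R}_k(K_n)\subseteq\mathbb{R}^{E_n}$ be the polyhedron defined by all inequalities valid for $\mathrm{CUT}_n$ that are supported by at most $k$ points. For a graph $G=([n],E)$, let $\mathrm{CUT}(G)=\pi_E(\mathrm{CUT}_n)$ and $\mathcal{R}_k(G)=\pi_E(\mathcal{R}_k(K_n))$, where $\pi_E$ is the coordinate projection onto $\mathbb{R}^E$. $\mathcal{G}_k$ is the class of all graphs $G$ with $\mathrm{CUT}(G)=\mathcal{R}_k(G)$. *)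

(* Defs.v *)
From HB Require Import structures.
From mathcomp Require Import all_boot all_order all_algebra.
From mathcomp Require Import reals.

Set Implicit Arguments.
Unset Strict Implicit.
Unset Printing Implicit Defensive.

Import Order.TTheory GRing.Theory Num.Theory.
Local Open Scope ring_scope.

Definition edge (n : nat) := {p : 'I_n * 'I_n | (p.1 < p.2)%N}.

Definition src n (e : edge n) : 'I_n := (val e).1.
Definition dst n (e : edge n) : 'I_n := (val e).2.

Definition pm (R : numDomainType) (b : bool) : R := if b then 1 else -1.

Definition cutvec (R : numDomainType) n (s : {ffun 'I_n -> bool}) : edge n -> R :=
  fun e => pm R (s (src e)) * pm R (s (dst e)).

Definition CUT (R : numDomainType) n (x : edge n -> R) : Prop :=
  exists lam : {ffun 'I_n -> bool} -> R,
    [/\ forall s, 0 <= lam s,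
        \sum_s lam s = 1
      & forall e, x e = \sum_s lam s * cutvec R s e].

Definition dot (R : numDomainType) n (w x : edge n -> R) : R :=
  \sum_e w e * x e.

Definition valid_cut (R : numDomainType) n (w : edge n -> R) (alpha : R) : Prop :=
  forall x, CUT x -> dot w x <= alpha.

Definition supp_nodes (R : numDomainType) n (w : edge n -> R) : {set 'I_n} :=
  [set i | [exists e, (w e != 0) && ((src e == i) || (dst e == i))]].

Definition Rk (R : numDomainType) (k : nat) n (x : edge n -> R) : Prop :=
  forall (w : edge n -> R) (alpha : R),
    valid_cut w alpha -> (#|supp_nodes w| <= k)%N -> dot w x <= alpha.

(* coordinate projection onto R^E (points of R^E represented by functions
   on all edges of K_n, only the coordinates in E being relevant) *)
Definition proj (R : numDomainType) n (E : {set edge n})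
    (S : (edge n -> R) -> Prop) (y : edge n -> R) : Prop :=
  exists x, S x /\ forall e, e \in E -> x e = y e.

Definition in_Gk (R : numDomainType) (k : nat) n (E : {set edge n}) : Prop :=
  forall y : edge n -> R, proj E (@CUT R n) y <-> proj E (@Rk R k n) y.

(* edge set of the graph on 'I_m obtained by mapping vertices by f
   (used for contractions: loops are dropped, parallel edges merged) *)
Definition image_edges n m (f : 'I_n -> 'I_m) (E : {set edge n}) : {set edge m} :=
  [set e' : edge m | [exists e in E,
     [set f (src e); f (dst e)] == [set src e'; dst e']]].

(* Main.v *)
Require Import Defs.
From HB Require Import structures.
From mathcomp Require Import all_boot all_order all_algebra.
From mathcomp Require Import reals.
From mathcomp Require Import lra.

Set Implicit Arguments.
Unset Strict Implicit.
Unset Printing Implicit Defensive.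
Import Order.TTheory GRing.Theory Num.Theory.
Local Open Scope ring_scope.

Lemma CUT_Rk (R : realType) k n (x : edge n -> R) : CUT x -> Rk k x.
Proof. by move=> Cx w a V _; apply: V. Qed.

Lemma proj_CUT_Rk (R : realType) k n (E : {set edge n}) (y : edge n -> R) :
  proj E (@CUT R n) y -> proj E (@Rk R k n) y.
Proof. by case=> x [Cx Hx]; exists x; split=> //; apply: CUT_Rk. Qed.

Lemma del_ok (R : realType) k n (E : {set edge n}) e :
  in_Gk R k E -> in_Gk R k (E :\ e).
Proof.
move=> hG y; split; first exact: proj_CUT_Rk.
case=> x [Rx Hx].
have [c [Cc Hc]] : proj E (@CUT R n) x by apply/hG; exists x.
exists c; split=> // e1 He1; rewrite Hc ?Hx //.
by move: He1; rewrite in_setD1 => /andP[].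
Qed.

Lemma set2_eq (T : finType) (a b c d : T) : [set a; b] = [set c; d] -> c != d ->
  (a = c /\ b = d) \/ (a = d /\ b = c).
Proof.
move=> H ncd.
have : a \in [set c; d] by rewrite -H set21.
have : b \in [set c; d] by rewrite -H set22.
have : c \in [set a; b] by rewrite H set21.
have : d \in [set a; b] by rewrite H set22.
rewrite !inE.
do !case/orP=> /eqP ?; subst; try by [left|right];
  try by rewrite eqxx in ncd.
Qed.

Lemma srcdst_neq n (e : edge n) : src e != dst e.
Proof.
apply/negP => /eqP h; move: (valP e); rewrite /src /dst in h.
by rewrite h ltnn.
Qed.

Lemma edge_of m (i j : 'I_m) : i != j ->
  exists e : edge m, (src e = i /\ dst e = j) \/ (src e = j /\ dst e = i).
Proof.
move=> nij; case: (ltngtP i j) => h.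
- by exists (exist _ (i,j) h); left.
- by exists (exist _ (j,i) h); right.
- by move: nij; rewrite (ord_inj h) eqxx.
Qed.

Definition Qp m (i j : 'I_m) (e' : edge m) := ((i, j) == val e') || ((j, i) == val e').

Lemma Qp_pred1 m (i j : 'I_m) (e : edge m) :
  (src e = i /\ dst e = j) \/ (src e = j /\ dst e = i) -> Qp i j =1 pred1 e.
Proof.
case: e => [[s d] /= sd]; rewrite /src /dst /= => H [[s' d'] /= sd'].
rewrite /Qp /= -(inj_eq val_inj) /= !xpair_eqE.
case: H => [[<- <-]|[<- <-]].
- apply/idP/idP; last by case/andP=> /eqP-> /eqP->; rewrite !eqxx.
  case/orP=> /andP[/eqP h1 /eqP h2]; subst; first by rewrite !eqxx.
  by move: (ltn_trans sd sd'); rewrite ltnn.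
- apply/idP/idP; last by case/andP=> /eqP-> /eqP->; rewrite !eqxx orbT.
  case/orP=> /andP[/eqP h1 /eqP h2]; subst; last by rewrite !eqxx.
  by move: (ltn_trans sd sd'); rewrite ltnn.
Qed.

Lemma Qp_diag m (i : 'I_m) : Qp i i =1 xpred0.
Proof.
move=> [[s d] /= sd]; rewrite /Qp /= orbb xpair_eqE.
by apply/negP => /andP[/eqP h1 /eqP h2]; subst; rewrite ltnn in sd.
Qed.

Definition Qe n m (f : 'I_n -> 'I_m) (e : edge n) (e' : edge m) :=
  Qp (f (src e)) (f (dst e)) e'.
Definition diag n m (f : 'I_n -> 'I_m) (e : edge n) := f (src e) == f (dst e).
Definition lift (R : realType) n m (f : 'I_n -> 'I_m) (Z : edge m -> R) (e : edge n) : R :=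
  (diag f e)%:R + \sum_(e' | Qe f e e') Z e'.
Definition wlift (R : realType) n m (f : 'I_n -> 'I_m) (w : edge n -> R) (e' : edge m) : R :=
  \sum_(e | Qe f e e') w e.
Definition cw (R : realType) n m (f : 'I_n -> 'I_m) (w : edge n -> R) : R :=
  \sum_e w e * (diag f e)%:R.
Definition phi n m (f : 'I_n -> 'I_m) (s : {ffun 'I_m -> bool}) : {ffun 'I_n -> bool} :=
  [ffun i => s (f i)].

Lemma dot_lift (R : realType) n m (f : 'I_n -> 'I_m) (w : edge n -> R) Z :
  dot w (lift f Z) = cw f w + dot (wlift f w) Z.
Proof.
rewrite /dot /lift /wlift /cw.
under eq_bigr do rewrite mulrDr.
rewrite big_split /=; congr (_ + _).
under eq_bigr => e _ do rewrite big_distrr big_mkcond.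
rewrite exchange_big; apply: eq_bigr => e' _.
rewrite big_distrl /= [RHS]big_mkcond //.
Qed.

Lemma pm_sq (R : realType) b : pm R b * pm R b = 1.
Proof. by case: b; rewrite /pm ?mulr1 ?mulrNN ?mulr1. Qed.

Lemma lift_cut (R : realType) n m (f : 'I_n -> 'I_m) s :
  lift f (cutvec R s) =1 cutvec R (phi f s).
Proof.
move=> e; rewrite /lift /cutvec !ffunE.
case: (boolP (diag f e)) => hd.
- rewrite big_pred0; last by move=> e'; rewrite /Qe (eqP hd) Qp_diag.
  by rewrite addr0 (eqP hd) pm_sq.
- have [e'' H] := edge_of hd.
  rewrite (eq_bigl _ _ (Qp_pred1 H)) big_pred1_eq add0r.
  by case: H => [[-> ->]|[-> ->]] //; rewrite mulrC.
Qed.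

Lemma lift_on (R : realType) n m (f : 'I_n -> 'I_m) (Z : edge m -> R) e e' :
  [set f (src e); f (dst e)] = [set src e'; dst e'] -> lift f Z e = Z e'.
Proof.
move=> H; have H2 := set2_eq H (srcdst_neq e').
have hd : diag f e = false.
  by rewrite /diag; case: H2 => [[-> ->]|[-> ->]]; apply/negbTE; rewrite ?[dst _ == _]eq_sym srcdst_neq.

rewrite /lift hd add0r.
have H3 : (src e' = f (src e) /\ dst e' = f (dst e)) \/
          (src e' = f (dst e) /\ dst e' = f (src e)).
  by case: H2 => [[-> ->]|[-> ->]]; [left|right].
by rewrite (eq_bigl _ _ (Qp_pred1 H3)) big_pred1_eq.
Qed.

Lemma supp_wlift (R : realType) n m (f : 'I_n -> 'I_m) (w : edge n -> R) :
  (#|supp_nodes (wlift f w)| <= #|supp_nodes w|)%N.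
Proof.
apply: leq_trans (leq_imset_card f _).
apply: subset_leq_card; apply/subsetP => i; rewrite inE => /existsP[e' /andP[nz hi]].
case: (pickP (fun e => Qe f e e' && (w e != 0))) => [e /andP[He nz'] | H0]; last first.
  move: nz; rewrite /wlift big1 ?eqxx // => e He.
  by move: (H0 e); rewrite He /= => /negbFE/eqP.
have Hs : src e \in supp_nodes w.
  by rewrite inE; apply/existsP; exists e; rewrite nz' eqxx.
have Hd : dst e \in supp_nodes w.
  by rewrite inE; apply/existsP; exists e; rewrite nz' eqxx orbT.
move: He hi; rewrite /Qe /Qp; case: e' {nz} => [[s d] /= sd].
rewrite /src /dst /= !xpair_eqE => He hi.
case/orP: He => /andP[/eqP h1 /eqP h2]; case/orP: hi => /eqP hi; subst;
  by apply/imsetP; first [by exists (src e) | by exists (dst e)].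
Qed.

Lemma cut_in_CUT (R : realType) n (s : {ffun 'I_n -> bool}) : CUT (cutvec R s).
Proof.
exists (fun t => (t == s)%:R); split.
- by move=> t; rewrite ler0n.
- by rewrite (bigD1 s) //= eqxx big1 ?addr0 // => t /negbTE ->.
- move=> e; rewrite (bigD1 s) //= eqxx mul1r big1 ?addr0 //.
  by move=> t /negbTE ->; rewrite mul0r.
Qed.

Lemma valid_wlift (R : realType) n m (f : 'I_n -> 'I_m) (w : edge n -> R) alpha :
  valid_cut w alpha -> valid_cut (wlift f w) (alpha - cw f w).
Proof.
move=> V X [mu [mu0 mu1 HX]].
have -> : dot (wlift f w) X = \sum_s mu s * dot (wlift f w) (cutvec R s).
  rewrite /dot; under eq_bigr do rewrite HX big_distrr.
  rewrite exchange_big /=; apply: eq_bigr => s _.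
  by rewrite big_distrr; apply: eq_bigr => e _; rewrite mulrCA.
rewrite -[X in _ <= X]mul1r -mu1 big_distrl /=.
apply: ler_sum => s _; apply: ler_wpM2l => //.
have := V _ (cut_in_CUT R (phi f s)).
have E1 : dot w (cutvec R (phi f s)) = dot w (lift f (cutvec R s)).
  by apply: eq_bigr => e _; rewrite lift_cut.
rewrite E1 dot_lift; lra.
Qed.

Lemma Rk_lift (R : realType) k n m (f : 'I_n -> 'I_m) (z : edge m -> R) :
  Rk k z -> Rk k (lift f z).
Proof.
move=> Rz w alpha V hs; rewrite dot_lift.
have := Rz _ _ (valid_wlift f V) (leq_trans (supp_wlift f w) hs); lra.
Qed.

Lemma pm_le1 (R : realType) a b : pm R a * pm R b <= 1.
Proof. by case: a; case: b; rewrite /pm ?mulr1 ?mulrNN ?mulr1 ?mul1r //; lra. Qed.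

Lemma pm_neq (R : realType) a b : a != b -> pm R a * pm R b = -1.
Proof. by case: a; case: b; rewrite /pm ?mulr1 ?mul1r. Qed.

Lemma contr_ok (R : realType) k n (E : {set edge n}) (hG : in_Gk R k E)
  (e0 : edge n) (He0 : e0 \in E) m (f : 'I_n -> 'I_m)
  (fsurj : forall j, exists i, f i = j)
  (fhyp : forall a b, f a = f b <-> (a = b \/ [set a; b] = [set src e0; dst e0])) :
  in_Gk R k (image_edges f E).
Proof.
move=> y; split; first exact: proj_CUT_Rk.
case=> z [Rz Hzy].
have fuv : f (src e0) = f (dst e0) by apply/fhyp; right.
have [c [[lam [lam0 lam1 Hc]] Hcx]] : proj E (@CUT R n) (lift f z).
  by apply/hG; exists (lift f z); split => //; apply: Rk_lift.
have Hx0 : lift f z e0 = 1.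
  rewrite /lift /diag fuv eqxx big_pred0 ?addr0 // => e'.
  by rewrite /Qe fuv Qp_diag.
have lamz : forall s : {ffun 'I_n -> bool}, s (src e0) != s (dst e0) -> lam s = 0.
  have Hsum : \sum_s lam s * (1 - cutvec R s e0) = 0.
    under eq_bigr do rewrite mulrBr mulr1.
    by rewrite sumrB lam1 -Hc Hcx // Hx0 subrr.
  move=> s nsuv.
  have Hp : forall t : {ffun 'I_n -> bool}, true -> 0 <= lam t * (1 - cutvec R t e0).
    by move=> t _; rewrite mulr_ge0 // subr_ge0 pm_le1.
  have := psumr_eq0P Hp Hsum (i := s) isT.
  rewrite /cutvec pm_neq // => h; lra.
pose g j := odflt (src e0) [pick i | f i == j].
have fg : forall j, f (g j) = j.
  move=> j; rewrite /g; case: pickP => [i /eqP //|H].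
  by have [i Hi] := fsurj j; move: (H i); rewrite Hi eqxx.
have phi_inj : injective (phi f).
  move=> s1 s2 H; apply/ffunP => j; rewrite -(fg j).
  by move/ffunP: H => /(_ (g j)); rewrite !ffunE.
have factor : forall s : {ffun 'I_n -> bool}, s (src e0) = s (dst e0) ->
    s = phi f [ffun j => s (g j)].
  move=> s suv; apply/ffunP => i; rewrite !ffunE.
  case: ((fhyp (g (f i)) i).1 (fg (f i))) => [-> // | H2].
  by case: (set2_eq H2 (srcdst_neq e0)) => [[-> ->]|[-> ->]].
have reindex : forall F : {ffun 'I_n -> bool} -> R,
    \sum_s lam s * F s = \sum_s' lam (phi f s') * F (phi f s').
  move=> F; rewrite (bigID (fun s => s \in phi f @: [set: {ffun 'I_m -> bool}])) /=.
  rewrite [X in _ + X]big1 ?addr0; last first.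
    move=> s Hs; case: (boolP (s (src e0) == s (dst e0))) => [/eqP suv | nsuv].
      by move: Hs; rewrite (factor s suv) imset_f ?inE.
    by rewrite lamz ?mul0r.
  rewrite big_imset /=; last by move=> ? ? _ _; apply: phi_inj.
  by apply: eq_bigl => s'; rewrite inE.
exists (fun e' => \sum_s' lam (phi f s') * cutvec R s' e'); split.
  exists (fun s' => lam (phi f s')); split => //.
  have := reindex (fun _ => 1).
  under eq_bigr do rewrite mulr1.
  under [X in _ = X -> _]eq_bigr do rewrite mulr1.
  by move=> <-.
move=> e' He'; have := He'; rewrite inE => /existsP[e /andP[eE /eqP Hset]].
rewrite -Hzy // -(lift_on z Hset) -Hcx // Hc reindex.
apply: eq_bigr => s' _; congr (_ * _); rewrite /cutvec /phi !ffunE.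
by case: (set2_eq Hset (srcdst_neq e')) => [[-> ->]|[-> ->]] //; rewrite mulrC.
Qed.

Theorem mainTheorem8 (R : realType) (k : nat) (hk : (2 <= k)%N)
    (n : nat) (E : {set edge n}) (hG : in_Gk R k E) :
  (* closed under edge deletion *)
  (forall e, e \in E -> in_Gk R k (E :\ e)) /\
  (* closed under contraction of an edge e0 = uv: f : [n] -> [m] is any
     surjection identifying exactly u and v (a labelling of G / e0) *)
  (forall (e0 : edge n), e0 \in E ->
   forall (m : nat) (f : 'I_n -> 'I_m),
     (forall j, exists i, f i = j) ->
     (forall a b, f a = f b <-> (a = b \/ [set a; b] = [set src e0; dst e0])) ->
     in_Gk R k (image_edges f E)).
Proof.
split.
- by move=> e _; apply: del_ok.
- by move=> e0 He0 m f fs fh; apply: (contr_ok hG He0 fs fh).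
Qed.
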